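(* In the setting of the shrinking generator with $SR_1$, $SR_2$ maximal-length LFSRs of coprime lengths $L_1<L_2$, let $C_2(x)\in GF(2)[x]$ be the characteristic polynomial of $SR_2$ and let $\lambda$ be a root of $C_2(x)$ in $GF(2^{L_2})$. Then the primitive polynomial $P(x)$ such that the characteristic polynomial of the shrunken sequence is $P(x)^N$ is $$P(x)=(x+\lambda^{E})(x+\lambda^{2E})(x+\lambda^{4E})\cdots(x+\lambda^{2^{L_2-1}E}),\qquad E=2^0+2^1+\cdots+2^{L_1-1}=2^{L_1}-1.$$ *)

(* Defs.v *)
From HB Require Import structures.
From mathcomp Require Import all_boot all_order all_algebra all_field.
Set Implicit Arguments. Unset Strict Implicit. Unset Printing Implicit Defensive.
Import Order.TTheory GRing.Theory Num.Theory.
Local Open Scope ring_scope.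

(* A sequence s over a ring R is generated by an LFSR with characteristic
   polynomial c = c_0 + c_1 x + ... + c_L x^L  iff
   c_0 s_n + c_1 s_(n+1) + ... + c_L s_(n+L) = 0 for all n. *)
Definition lin_rec (R : nzRingType) (c : {poly R}) (s : nat -> R) : Prop :=
  forall n : nat, \sum_(i < size c) c`_i * s (n + i)%N = 0.

Definition ml_lfsr (L : nat) (C : {poly 'F_2}) (s : nat -> 'F_2) : Prop :=
  [/\ size C = L.+1, primitive_poly C, lin_rec C s & exists n, s n != 0].

Definition shrunken (u v z : nat -> 'F_2) : Prop :=
  exists t : nat -> nat,
    [/\ forall j, (t j < t j.+1)%N,
        forall n, u n = 1 <-> exists j, t j = n
      & forall j, z j = v (t j)].

(* Main.v *)
Require Import Defs.
From HB Require Import structures.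
From mathcomp Require Import all_boot all_order all_algebra all_field.
From Stdlib Require Import Lia.
Import Order.TTheory GRing.Theory Num.Theory.
Local Open Scope ring_scope.

Set Implicit Arguments. Unset Strict Implicit. Unset Printing Implicit Defensive.

Definition act (R : comNzRingType) (q : {poly R}) (s : nat -> R) (n : nat) : R :=
  \sum_(i < size q) q`_i * s (n + i)%N.

Lemma sumc_widen (R : comNzRingType) (q : {poly R}) (f : nat -> R) m :
  (size q <= m)%N -> \sum_(i < size q) q`_i * f i = \sum_(i < m) q`_i * f i.
Proof.
move=> H; rewrite (big_ord_widen m (fun i => q`_i * f i) H) big_mkcond /=.
apply: eq_bigr => i _; case: ifP => // /negbT; rewrite -leqNgt => Hi.
by rewrite nth_default // mul0r.
Qed.

Lemma act_widen (R : comNzRingType) (q : {poly R}) s n m :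
  (size q <= m)%N -> act q s n = \sum_(i < m) q`_i * s (n + i)%N.
Proof. move=> H; rewrite /act; exact: (sumc_widen (fun i => s (n + i)%N) H). Qed.

Lemma act_add (R : comNzRingType) (p q : {poly R}) s n :
  act (p + q) s n = act p s n + act q s n.
Proof.
set m := maxn (size p) (size q).
rewrite (@act_widen _ (p + q) s n m); last by rewrite (leq_trans (size_polyD _ _)).
rewrite (@act_widen _ p s n m) ?leq_maxl // (@act_widen _ q s n m) ?leq_maxr //.
by rewrite -big_split; apply: eq_bigr => i _; rewrite coefD mulrDl.
Qed.

Lemma act_C (R : comNzRingType) (c : R) s n : act c%:P s n = c * s n.
Proof.
rewrite (@act_widen _ _ _ _ 1) ?size_polyC_leq1 // big_ord1 coefC /=.
by rewrite addn0.
Qed.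

Lemma act_Cmul (R : comNzRingType) (c : R) q s n :
  act (c%:P * q) s n = c * act q s n.
Proof.
rewrite mul_polyC (@act_widen _ (c *: q) s n (size q)) ?size_scale_leq // /act.
by rewrite mulr_sumr; apply: eq_bigr => i _; rewrite coefZ mulrA.
Qed.

Lemma act_X (R : comNzRingType) q (s : nat -> R) n :
  act ('X * q) s n = act q s n.+1.
Proof.
rewrite (@act_widen _ _ _ _ (size q).+1); last first.
  by rewrite (leq_trans (size_mul_leq _ _)) // size_polyX.
rewrite big_ord_recl coefXM /= mul0r add0r /act; apply: eq_bigr => i _.
by rewrite coefXM /= addnS.
Qed.

Lemma act0 (R : comNzRingType) (s : nat -> R) n : act 0 s n = 0.
Proof. by rewrite /act size_poly0 big_ord0. Qed.

Lemma act_seq0 (R : comNzRingType) (q : {poly R}) n : act q (fun _ => 0) n = 0.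
Proof. by rewrite /act big1 // => i _; rewrite mulr0. Qed.

Lemma act_ext (R : comNzRingType) (p : {poly R}) s1 s2 n1 n2 :
  (forall i, s1 (n1 + i)%N = s2 (n2 + i)%N) -> act p s1 n1 = act p s2 n2.
Proof. by move=> H; apply: eq_bigr => i _; rewrite H. Qed.

Lemma act_mul (R : comNzRingType) (p q : {poly R}) s n :
  act (p * q) s n = act p (act q s) n.
Proof.
elim/poly_ind: p q n => [|p c IH] q n; first by rewrite mul0r !act0.
rewrite mulrDl -mulrA (mulrC 'X) act_add IH act_Cmul.
rewrite act_add (mulrC p) act_X act_C; congr (_ + _).
apply: act_ext => i; by rewrite mulrC act_X addSn.
Qed.

Lemma lin_rec_dvd (R : fieldType) (c q : {poly R}) s :
  lin_rec c s -> c %| q -> lin_rec q s.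
Proof.
move=> Hc /divpK <- n; rewrite -/(act _ _ _) act_mul.
rewrite (@act_ext _ _ _ (fun _ => 0) n n) ?act_seq0 // => i; exact: Hc.
Qed.

Lemma act_Xn (R : comNzRingType) m (s : nat -> R) n : act 'X^m s n = s (n + m)%N.
Proof.
elim: m n => [|m IH] n; first by rewrite expr0 -polyC1 act_C mul1r addn0.
by rewrite exprS act_X IH addSnnS.
Qed.

Lemma act_comp (R : comNzRingType) (p : {poly R}) m s n :
  act (p \Po 'X^m) s n = \sum_(i < size p) p`_i * s (n + i * m)%N.
Proof.
elim/poly_ind: p n => [|p c IH] n; first by rewrite comp_poly0 act0 size_poly0 big_ord0.
rewrite comp_polyD comp_polyM comp_polyX comp_polyC act_add act_C mulrC act_mul act_Xn.

rewrite IH (@sumc_widen _ (p * 'X + c%:P) (fun i => s (n + i * m)%N) (size p).+1); last first.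
  rewrite (leq_trans (size_polyD _ _)) // geq_max (leq_trans (size_mul_leq _ _)) ?size_polyX ?addn2 //.
  by rewrite (leq_trans (size_polyC_leq1 _)).
rewrite big_ord_recl /= coefD coefMX coefC /= add0r mul0n addn0 addrC; congr (_ + _).
apply: eq_bigr => i _; rewrite coefD coefMX coefC /= addr0 mulSn addnA.
by rewrite (addnC n m).
Qed.


Lemma rec_next (R : comNzRingType) (c : {poly R}) L s :
  size c = L.+1 -> c`_L = 1 -> lin_rec c s ->
  forall n, s (n + L)%N = - \sum_(i < L) c`_i * s (n + i)%N.
Proof.
move=> Hs HL Hc n; have := Hc n; rewrite Hs big_ord_recr /= HL mul1r => /eqP.
by rewrite addrC addr_eq0 => /eqP.
Qed.

Lemma rec_det (R : comNzRingType) (c : {poly R}) L s1 s2 a b :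
  size c = L.+1 -> c`_L = 1 -> lin_rec c s1 -> lin_rec c s2 ->
  (forall i, (i < L)%N -> s1 (a + i)%N = s2 (b + i)%N) ->
  forall i, s1 (a + i)%N = s2 (b + i)%N.
Proof.
move=> Hs HL H1 H2 H i; elim/ltn_ind: i => i IH.
case: (ltnP i L) => [/H //|HiL].
rewrite -(subnK HiL) !addnA !(rec_next Hs HL) // ; congr (- _).
apply: eq_bigr => k _; rewrite -!addnA IH //.
by rewrite -{2}(subnK HiL) ltn_add2l.
Qed.

Lemma irr_bezout (R : fieldType) (C Q : {poly R}) :
  irreducible_poly C -> ~~ (C %| Q) ->
  exists u w : {poly R}, exists c : R, c != 0 /\ u * C + w * Q = c%:P.
Proof.
move=> Hirr HnD.
have Hcop : coprimep C Q.
  apply/coprimepP => d dC dQ.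
  case: (irredp_XsubCP Hirr dC) => // Hd.
  by move: HnD; rewrite -(eqp_dvdl _ Hd) dQ.
case/Bezout_coprimepP: Hcop => [[u w]] /= H.
move: H; rewrite -size_poly_eq1 => /size_poly1P [c Hc Hu].
by exists u, w, c.
Qed.

Lemma lin_rec_irr (R : fieldType) (C Q : {poly R}) s :
  irreducible_poly C -> lin_rec C s -> lin_rec Q s -> (exists n, s n != 0) ->
  C %| Q.
Proof.
move=> Hirr HC HQ [n Hn]; apply/negPn/negP => HnD.
have [u [w [c [Hc0 He]]]] := irr_bezout Hirr HnD.
have := act_add (u * C) (w * Q) s n.
rewrite He act_C !act_mul.
rewrite (@act_ext _ u _ (fun _ => 0) n n) ?act_seq0; last by move=> i; exact: HC.
rewrite (@act_ext _ w _ (fun _ => 0) n n) ?act_seq0; last by move=> i; exact: HQ.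
rewrite addr0 => /eqP; rewrite mulf_eq0 (negPf Hc0) /=.
by rewrite (negPf Hn).
Qed.

Lemma root_irr (R : fieldType) (S : fieldType) (f : {rmorphism R -> S})
  (C Q : {poly R}) x :
  irreducible_poly C -> root (map_poly f C) x -> root (map_poly f Q) x -> C %| Q.
Proof.
move=> Hirr HC HQ; apply/negPn/negP => HnD.
have [u [w [c [Hc0 He]]]] := irr_bezout Hirr HnD.
have := congr1 (fun p => (map_poly f p).[x]) He.
rewrite /= rmorphD !rmorphM /= hornerD !hornerM (eqP HC) (eqP HQ) !mulr0 addr0.
rewrite map_polyC hornerC => /esym/eqP; rewrite fmorph_eq0.
by rewrite (negPf Hc0).
Qed.


Lemma F2_cases (x : 'F_2) : x = 0 \/ x = 1.
Proof.
case: x => m Hm.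
have H2 : (m < 2)%N by exact Hm.
case: m Hm H2 => [|[|m]] Hm H2 //; [left|right]; exact/val_inj.
Qed.

Lemma F2_sq (x : 'F_2) : x * x = x.
Proof. by case: (F2_cases x) => Hx; rewrite Hx ?mul0r ?mul1r. Qed.

Lemma F2_neq1 (x : 'F_2) : x != 1 -> x = 0.
Proof. by case: (F2_cases x) => Hx; rewrite Hx // eqxx. Qed.

Lemma prim_card (C : {poly 'F_2}) L :
  size C = L.+1 -> (0 < L)%N -> C \is monic -> #|{poly %/ C}|.-1 = (2 ^ L - 1)%N.
Proof.
move=> Hs HL Hm; rewrite card_monic_qpoly ?Hs // card_Fp //.
by rewrite subn1.
Qed.

Lemma act_XnB (R : comNzRingType) d (s : nat -> R) n :
  act ('X^d - 1) s n = s (n + d)%N - s n.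
Proof. by rewrite -polyC1 -polyCN act_add act_Xn act_C mulN1r. Qed.

Lemma lin_rec_XnB (R : comNzRingType) d (s : nat -> R) :
  lin_rec ('X^d - 1) s <-> forall n, s (n + d)%N = s n.
Proof.
split=> H n; have := H n; rewrite -/(act _ _ _) act_XnB.
  by move/eqP; rewrite subr_eq0 => /eqP.
by move=> ->; rewrite subrr.
Qed.

Lemma ml_facts L C u : (0 < L)%N -> ml_lfsr L C u ->
  [/\ size C = L.+1, C`_L = 1, irreducible_poly C, lin_rec C u &
      [/\ (exists n, u n != 0), C %| 'X^(2 ^ L - 1) - 1
    & forall n, (0 < n < 2 ^ L - 1)%N -> ~~ (C %| 'X^n - 1)]].
Proof.
move=> HL [Hs Hp Hr Hnz].
case/primitive_polyP: Hp => [[Hirr Hmon] Hdv Hmin].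
have Hc := prim_card Hs HL Hmon.
rewrite Hc in Hdv Hmin.
have HL1 : C`_L = 1 by move: Hmon => /monicP; rewrite lead_coefE Hs /=.
by split.
Qed.

Lemma ml_period L C u : (0 < L)%N -> ml_lfsr L C u ->
  forall n k, u (n + k * (2 ^ L - 1))%N = u n.
Proof.
move=> HL H; have [Hs H1 Hirr Hr [Hnz Hdv Hmin]] := ml_facts HL H.
have /lin_rec_XnB Hp := lin_rec_dvd Hr Hdv.
move=> n; elim=> [|k IH]; first by rewrite mul0n addn0.
by rewrite mulSn addnA addnAC Hp IH.
Qed.

Lemma ml_minper L C u : (0 < L)%N -> ml_lfsr L C u ->
  forall d, (0 < d < 2 ^ L - 1)%N -> ~ (forall n, u (n + d)%N = u n).
Proof.
move=> HL H d Hd Hp; have [Hs H1 Hirr Hr [Hnz Hdv Hmin]] := ml_facts HL H.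
have := lin_rec_irr Hirr Hr (proj2 (lin_rec_XnB d u) Hp) Hnz.
by move/negP: (Hmin d Hd).
Qed.

Lemma ml_shift_all L C u : (0 < L)%N -> ml_lfsr L C u ->
  forall a d, (forall i, u (a + i + d)%N = u (a + i)%N) -> forall n, u (n + d)%N = u n.
Proof.
move=> HL H a d Hd n.
have HE : (0 < 2 ^ L - 1)%N by rewrite subn_gt0 -{1}(expn0 2) ltn_exp2l.
have Ha : (a <= n + a * (2 ^ L - 1))%N.
  by rewrite (leq_trans _ (leq_addl _ _)) // leq_pmulr.
rewrite -(ml_period HL H (n + d) a) -(ml_period HL H n a) addnAC.
by rewrite -(subnKC Ha) Hd.
Qed.

Lemma ml_inj L C u : (0 < L)%N -> ml_lfsr L C u ->
  forall a b, (a < 2 ^ L - 1)%N -> (b < 2 ^ L - 1)%N ->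
  (forall i, (i < L)%N -> u (a + i)%N = u (b + i)%N) -> a = b.
Proof.
move=> HL H.
have [Hs H1 Hirr Hr [Hnz Hdv Hmin]] := ml_facts HL H.
suff Hw : forall a b, (a <= b)%N -> (b < 2 ^ L - 1)%N ->
  (forall i, (i < L)%N -> u (a + i)%N = u (b + i)%N) -> a = b.
  move=> a b Ha Hb Hi; case: (leqP a b) => Hab; first exact: Hw.
  by apply/esym/Hw; [exact: ltnW | by [] | move=> i /Hi].
move=> a b Hab Hb Hi.
have Hall := rec_det Hs H1 Hr Hr Hi.
case: (ltngtP a b) Hab => // Hlt _.
exfalso; apply: (ml_minper HL H (d := b - a)).
  by rewrite subn_gt0 Hlt /= (leq_ltn_trans (leq_subr _ _)).
apply: (ml_shift_all HL H (a := a)) => i.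
by rewrite addnAC subnKC ?(ltnW Hlt) // Hall.
Qed.

Lemma ml_nz L C u : (0 < L)%N -> ml_lfsr L C u ->
  forall a, ~ (forall i, (i < L)%N -> u (a + i)%N = 0).
Proof.
move=> HL H a Hi.
have [Hs H1 Hirr Hr [Hnz Hdv Hmin]] := ml_facts HL H.
have Hr0 : lin_rec C (fun _ => (0 : 'F_2)) by move=> n; exact: act_seq0.
have Hall := rec_det (s2 := fun _ => 0) (b := 0) Hs H1 Hr Hr0 Hi.
case: Hnz => n; apply/negP/negPn/eqP.
have Ha : (a <= n + a * (2 ^ L - 1))%N.
  have HE : (0 < 2 ^ L - 1)%N by rewrite subn_gt0 -{1}(expn0 2) ltn_exp2l.
  by rewrite (leq_trans _ (leq_addl _ _)) // leq_pmulr.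
by rewrite -(ml_period HL H n a) -(subnKC Ha) Hall.
Qed.


Lemma ml_count L C u : (0 < L)%N -> ml_lfsr L C u ->
  count (fun n => u n == 1) (iota 0 (2 ^ L - 1)) = (2 ^ L.-1)%N.
Proof.
move=> HL H.
have Hinj := ml_inj HL H.
have Hnz := ml_nz HL H.
move: HL Hinj Hnz; case: L H => // k H _ Hinj Hnz /=.
set E := (2 ^ k.+1 - 1)%N in Hinj *.
pose st (n : nat) := [ffun i : 'I_k => u (n + i.+1)%N].
have Hst : {in iota 0 E &, forall a b, u a = u b -> st a = st b -> a = b}.
  move=> a b; rewrite !mem_iota /= !add0n => Ha Hb Huab Hsab.
  apply: Hinj => // [[|i]] Hi; first by rewrite !addn0.
  have := congr1 (fun f : {ffun 'I_k -> 'F_2} => f (Ordinal (Hi : (i < k)%N))) Hsab.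
  by rewrite /st !ffunE.
set ones := [seq n <- iota 0 E | u n == 1].
set zeros := [seq n <- iota 0 E | predC (fun n => u n == 1) n].
have Hsum : (count (fun n => u n == 1%R) (iota 0 E) +
             count (predC (fun n => u n == 1%R)) (iota 0 E))%N = E.
  by rewrite count_predC size_iota.
have Hu1 : uniq (map st ones).
  rewrite map_inj_in_uniq ?filter_uniq ?iota_uniq // => a b.
  rewrite !mem_filter => /andP [/eqP Ha Ha'] /andP [/eqP Hb Hb'].
  by apply: Hst => //; rewrite Ha Hb.
have Hu0 : uniq (map st zeros).
  rewrite map_inj_in_uniq ?filter_uniq ?iota_uniq // => a b.
  rewrite !mem_filter => /andP [/= /F2_neq1 Ha Ha'] /andP [/= /F2_neq1 Hb Hb'].
  by apply: Hst => //; rewrite Ha Hb.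
have Hcard : #|{ffun 'I_k -> 'F_2}| = (2 ^ k)%N by rewrite card_ffun card_Fp // card_ord.
have Ho : (count (fun n => u n == 1%R) (iota 0 E) <= 2 ^ k)%N.
  rewrite -size_filter -/ones -(size_map st) -(card_uniqP Hu1) -Hcard.
  exact: max_card.
have Hz : (count (predC (fun n => u n == 1%R)) (iota 0 E) <= (2 ^ k).-1)%N.
  rewrite -size_filter -/zeros -(size_map st) -(card_uniqP Hu0) -Hcard.
  rewrite -(cardC1 [ffun => 0]); apply: subset_leq_card; apply/subsetP => f.
  case/mapP => n; rewrite mem_filter => /andP [/= /F2_neq1 Hn _] -> /=.
  apply/eqP => Hs; apply: (Hnz n) => [[|i]] Hi; first by rewrite addn0.
  have := congr1 (fun f : {ffun 'I_k -> 'F_2} => f (Ordinal (Hi : (i < k)%N))) Hs.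
  by rewrite /st !ffunE addnS.
move: Ho Hz Hsum; rewrite /E expnS mulSn mul1n.
have : (0 < 2 ^ k)%N by rewrite expn_gt0.
move: (2 ^ k)%N (count _ _) (count _ _) => X a b.
rewrite -subn1 => /ssrnat.leP H0 /ssrnat.leP H1 /ssrnat.leP H2 Hs.
move: Hs H1 H2; rewrite -?(mulnE, plusE, minusE) => Hs H1 H2.

lia.
Qed.


Lemma mono_t (t : nat -> nat) : (forall j, (t j < t j.+1)%N) ->
  forall i j, (t i < t j)%N = (i < j)%N.
Proof.
move=> Ht; have Hh := homo_ltn ltn_trans Ht.
move=> i j; case: (ltngtP i j) => [/Hh -> //| Hji | ->]; last by rewrite ltnn.
by apply/negbTE; rewrite -leqNgt ltnW // Hh.
Qed.

Lemma shrunken_step (u : nat -> 'F_2) E N (t : nat -> nat) :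
  (forall n, u (n + E)%N = u n) ->
  count (fun n => u n == 1) (iota 0 E) = N ->
  (forall j, (t j < t j.+1)%N) -> (forall n, u n = 1 <-> exists j, t j = n) ->
  forall j, t (j + N)%N = (t j + E)%N.
Proof.
move=> Hper HN Hinc Ht.
pose cnt m := count (fun n => u n == 1) (iota 0 m).
have cntS m : cnt m.+1 = (cnt m + (u m == 1%R))%N.
  by rewrite /cnt -[m.+1]addn1 iotaD count_cat add0n [iota m 1]/iota [count _ [:: m]]/count addn0.
have cntE m : cnt (m + E)%N = (cnt m + N)%N.
  elim: m => [|m IH]; first by rewrite add0n /cnt HN.
  by rewrite addSn !cntS IH Hper -!addnA (addnC N).
have Hmono := mono_t Hinc.
have Hinj i j : (t i == t j) = (i == j).
  by rewrite eqn_leq (leqNgt (t i)) (leqNgt (t j)) !Hmono -!leqNgt -eqn_leq.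
have Hidx : forall m k, (forall i, (t i < m)%N = (i < cnt m)%N) -> t k = m -> k = cnt m.
  move=> m k Hc Hk; subst m; have H1 := Hc k; have H2 := Hc (cnt (t k)).
  rewrite !Hmono ltnn in H1 H2.
  by apply/eqP; rewrite eqn_leq (leqNgt k) (leqNgt (cnt _)) -H1 H2 ltnn /=.
have Hchar : forall m i, (t i < m)%N = (i < cnt m)%N.
  elim=> [|m IH] i; first by [].
  rewrite cntS ltnS leq_eqVlt orbC IH.
  case: (u m =P 1) => [Hm|Hm].
    have [k Hk] := (proj1 (Ht m) Hm).
    have Hkc := Hidx m k IH Hk.
    by rewrite -Hk Hinj; rewrite -Hk in Hkc; rewrite -Hkc addn1 ltnS [X in _ = X]leq_eqVlt orbC.
  rewrite addn0; case: eqP => [Him|]; last by rewrite orbF.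
  by exfalso; apply: Hm; apply/(proj2 (Ht m)); exists i.
move=> j.
have Hu : u (t j + E)%N = 1 by rewrite Hper; apply/(proj2 (Ht _)); exists j.
have [k Hk] := proj1 (Ht _) Hu.
have Hk' := Hidx _ k (Hchar _) Hk.
have Hj := Hidx _ j (Hchar _) erefl.
by rewrite -Hk Hk' cntE -Hj.
Qed.

Lemma shrunken_rec (P : {poly 'F_2}) (u v z : nat -> 'F_2) E N :
  lin_rec (P \Po 'X^E) v -> (forall n, u (n + E)%N = u n) ->
  count (fun n => u n == 1) (iota 0 E) = N -> shrunken u v z ->
  lin_rec (P \Po 'X^N) z.
Proof.
move=> HP Hper HN [t [Hinc Ht Hz]] j.
have Hstep := shrunken_step Hper HN Hinc Ht.
have Hti i : t (j + i * N)%N = (t j + i * E)%N.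
  elim: i => [|i IH]; first by rewrite !mul0n !addn0.
  by rewrite !mulSn (addnC N) (addnC E) !addnA Hstep IH.
have := HP (t j); change (act (P \Po 'X^E) v (t j) = 0 -> act (P \Po 'X^N) z j = 0).
rewrite !act_comp => H; rewrite -[X in _ = X]H.
by apply: eq_bigr => i _; rewrite Hz Hti.
Qed.

Lemma F2_frob (p : {poly 'F_2}) : p ^+ 2 = p \Po 'X^2.
Proof.
elim/poly_ind: p => [|q c IH]; first by rewrite comp_poly0 expr0n.
have H2 : (2%:R : {poly 'F_2}) = 0 by rewrite -polyC_natr (@pchar_Fp_0 2).

rewrite sqrrD -mulr_natr H2 mulr0 addr0 exprMn IH [c%:P ^+ 2]expr2 -polyCM F2_sq.
by rewrite comp_polyD comp_polyM comp_polyX comp_polyC.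

Qed.

Lemma F2_frobn (p : {poly 'F_2}) k : p ^+ (2 ^ k) = p \Po 'X^(2 ^ k).
Proof.
elim: k => [|k IH]; first by rewrite expn0 expr1 comp_polyXr.
rewrite expnSr exprM IH F2_frob -comp_polyA.
by rewrite comp_Xn_poly -exprM mulnC.
Qed.


Lemma pow2_split a c : (2 ^ (a + c) - 1 = 2 ^ c * (2 ^ a - 1) + (2 ^ c - 1))%N.
Proof.
rewrite expnD mulnC mulnBr muln1.
have H1 : (1 <= 2 ^ c)%N by rewrite expn_gt0.
have H2 : (2 ^ c <= 2 ^ c * 2 ^ a)%N by rewrite leq_pmulr // expn_gt0.
move: H1 H2; move: (2 ^ c * 2 ^ a)%N (2 ^ c)%N => Y X.
move=> /ssrnat.leP H1 /ssrnat.leP H2; rewrite -!minusE -!plusE; lia.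
Qed.

Lemma gcd_pow2 a b : gcdn (2 ^ a - 1) (2 ^ b - 1) = (2 ^ (gcdn a b) - 1)%N.
Proof.
move: {2}(a + b)%N (leqnn (a + b)) => n.
elim: n a b => [|n IH] a b.
  by rewrite leqn0 addn_eq0 => /andP [/eqP -> /eqP ->].
move=> Hab.
case: a Hab => [|a] Hab; first by rewrite gcd0n expn0 subnn gcd0n.
case: b Hab => [|b] Hab; first by rewrite gcdn0 expn0 subnn gcdn0.
case: (leqP a.+1 b.+1) => Hle.
  rewrite -(subnKC Hle) pow2_split gcdnMDl gcdnDl IH //.
  by rewrite subnKC // -ltnS (leq_trans _ Hab) // addSn ltnS leq_addl.
rewrite gcdnC (gcdnC a.+1).
rewrite -(subnKC (ltnW Hle)) pow2_split gcdnMDl gcdnDl IH //.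
by rewrite subnKC ?(ltnW Hle) // -ltnS (leq_trans _ Hab) // addnC addSn ltnS leq_addl.
Qed.

Lemma coprime_pow2 a b : coprime a b -> coprime (2 ^ a - 1) (2 ^ b - 1).
Proof. by rewrite /coprime gcd_pow2 => /eqP ->. Qed.

Lemma char2 (F : fieldExtType 'F_2) : 2 \in [char F].
Proof.
apply/andP; split => //.
by rewrite -(rmorph_nat (in_alg F)) (@pchar_Fp_0 2) // rmorph0.
Qed.

Lemma map_XnB (F : fieldExtType 'F_2) m :
  map_poly (in_alg F) ('X^m - 1) = 'X^m - 1.
Proof. by rewrite rmorphB rmorph1 /= map_polyXn. Qed.

Lemma root_XnB (F : fieldType) (x : F) m : root ('X^m - 1) x = (x ^+ m == 1).
Proof. by rewrite /root !hornerE subr_eq0. Qed.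

Lemma lam_order (F : fieldExtType 'F_2) L C (s : nat -> 'F_2) (x : F) :
  (0 < L)%N -> ml_lfsr L C s -> root (map_poly (in_alg F) C) x ->
  x ^+ (2 ^ L - 1) = 1 /\ forall m, x ^+ m = 1 -> (2 ^ L - 1 %| m)%N.
Proof.
move=> HL H Hx; have [Hs H1 Hirr Hr [Hnz Hdv Hmin]] := ml_facts HL H.
have HV : x ^+ (2 ^ L - 1) = 1.
  apply/eqP; rewrite -root_XnB -(map_XnB F); apply: root_dvdp Hx.
  by rewrite dvdp_map.
split => // m Hm.
have HE : (0 < 2 ^ L - 1)%N by rewrite subn_gt0 -{1}(expn0 2) ltn_exp2l.
have Hmod : x ^+ (m %% (2 ^ L - 1)) = 1.
  move: Hm; rewrite {1}(divn_eq m (2 ^ L - 1)) exprD (mulnC (m %/ _)%N) exprM HV expr1n mul1r.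
  done.
case: (posnP (m %% (2 ^ L - 1))) => [H0|Hpos]; first by rewrite /dvdn H0.
exfalso.
have Hd : C %| 'X^(m %% (2 ^ L - 1)) - 1.
  apply: (root_irr (f := in_alg F) Hirr Hx).
  by rewrite map_XnB root_XnB Hmod.
by move/negP: (Hmin _ (andb_true_intro (conj Hpos (ltn_pmod m HE)))).
Qed.

Lemma oppF2 (F : fieldExtType 'F_2) (y : F) : - y = y.
Proof.
apply/eqP; rewrite eq_sym -subr_eq0 opprK -mulr2n -mulr_natr.
by rewrite (pcharf0 (char2 F)) mulr0.
Qed.

Lemma sq01 (F : fieldType) (y : F) : y ^+ 2 = y -> y = 0 \/ y = 1.
Proof.
move=> H; have : y * (y - 1) == 0 by rewrite mulrBr mulr1 -expr2 H subrr.
rewrite mulf_eq0 subr_eq0 => /orP [/eqP ->|/eqP ->]; [by left | by right].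
Qed.

Notation frobF F := (GRing.pFrobenius_aut (char2 F)).

Lemma map_frob_F2 (F : fieldExtType 'F_2) (D : {poly 'F_2}) :
  map_poly (frobF F) (map_poly (in_alg F) D) = map_poly (in_alg F) D.
Proof.
apply/polyP => i; rewrite !coef_map /= pFrobenius_autE.
change ((in_alg F (D`_i)) ^+ 2 = in_alg F (D`_i)).
by rewrite -rmorphXn expr2 F2_sq.
Qed.

Lemma root_sq (F : fieldExtType 'F_2) (D : {poly 'F_2}) (y : F) :
  root (map_poly (in_alg F) D) y -> root (map_poly (in_alg F) D) (y ^+ 2).
Proof.
rewrite /root -(pFrobenius_autE (char2 F)) -{2}(map_frob_F2 F D) horner_map => /eqP ->.
by rewrite rmorph0.
Qed.

Definition Qp (F : fieldType) (x : F) L E : {poly F} :=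
  \prod_(i < L) ('X + (x ^+ (2 ^ i * E))%:P).
Definition rts (F : fieldType) (x : F) L E := [seq x ^+ (2 ^ i * E) | i <- iota 0 L].

Lemma Qp_rts (F : fieldExtType 'F_2) (x : F) L E :
  Qp x L E = \prod_(z <- rts x L E) ('X - z%:P).
Proof.
rewrite /Qp /rts big_map -(big_mkord xpredT (fun i => 'X + (x ^+ (2 ^ i * E))%:P)).
by rewrite /index_iota subn0; apply: eq_bigr => i _; rewrite -polyCN oppF2.
Qed.

Lemma r_next (F : fieldType) (x : F) i E :
  (x ^+ (2 ^ i * E)) ^+ 2 = x ^+ (2 ^ i.+1 * E).
Proof. by rewrite -exprM expnS; congr (_ ^+ _); rewrite mulnC mulnA. Qed.

Lemma Qp_frob (F : fieldExtType 'F_2) (x : F) L E :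
  x ^+ (2 ^ L * E) = x ^+ E ->
  map_poly (frobF F) (Qp x L E) = Qp x L E.
Proof.
move=> Hw; rewrite /Qp rmorph_prod.
under eq_bigr => i _ do rewrite rmorphD /= map_polyX map_polyC /= pFrobenius_autE r_next.
case: L Hw => [|L] Hw; first by rewrite !big_ord0.
rewrite big_ord_recr big_ord_recl /= mulrC; congr (_ * _).
by rewrite Hw expn0 mul1n.

Qed.

Lemma Qp_coef (F : fieldExtType 'F_2) (x : F) L E i :
  x ^+ (2 ^ L * E) = x ^+ E -> (Qp x L E)`_i = 0 \/ (Qp x L E)`_i = 1.
Proof.
move=> Hw; apply: sq01.
have := congr1 (fun p : {poly F} => p`_i) (Qp_frob Hw).
by rewrite /= coef_map /= pFrobenius_autE.
Qed.

Lemma expr_diff (F : fieldType) (x : F) a b :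
  x != 0 -> (a <= b)%N -> x ^+ a = x ^+ b -> x ^+ (b - a) = 1.
Proof.
move=> Hx Hab H; apply: (mulfI (expf_neq0 a Hx)).
by rewrite -exprD subnKC // mulr1.
Qed.

Lemma oddV L : (0 < L)%N -> odd (2 ^ L - 1).
Proof.
move=> HL; rewrite oddB ?expn_gt0 // oddX /=.
by case: L HL.
Qed.

Lemma rts_uniq (F : fieldType) (x : F) L E :
  (0 < L)%N -> x != 0 -> (forall m, x ^+ m = 1 -> (2 ^ L - 1 %| m)%N) ->
  coprime (2 ^ L - 1) E -> uniq (rts x L E).
Proof.
move=> HL Hx Hord HcE.
suff Hw : forall i j, (i <= j)%N -> (j < L)%N ->
    x ^+ (2 ^ i * E) = x ^+ (2 ^ j * E) -> i = j.
  rewrite map_inj_in_uniq ?iota_uniq // => i j; rewrite !mem_iota /= !add0n => Hi Hj Hij.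
  case: (leqP i j) => Hle; first exact: Hw.
  by apply/esym/Hw => //; rewrite ltnW.
move=> i j Hij HjL Heq.
case: (ltngtP i j) Hij => // Hlt _.
exfalso.
have Hle : (2 ^ i * E <= 2 ^ j * E)%N by rewrite leq_mul2r leq_exp2l // ltnW // orbT.
have H1 := expr_diff Hx Hle Heq.
have H2 : (2 ^ j * E - 2 ^ i * E = E * (2 ^ i * (2 ^ (j - i) - 1)))%N.
  rewrite -{1}(subnKC (ltnW Hlt)) expnD.
  by rewrite mulnBr muln1 mulnBr (mulnC E) (mulnC E).
have := Hord _ H1; rewrite H2 Gauss_dvdr // Gauss_dvdr; last first.
  by apply: coprimeXr; rewrite coprimen2 oddV.
have Hpos : (0 < 2 ^ (j - i) - 1)%N.
  by rewrite subn_gt0 -{1}(expn0 2) ltn_exp2l // subn_gt0.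
move/(dvdn_leq Hpos); rewrite leq_sub2rE ?expn_gt0 // leq_exp2l // leqNgt.
by rewrite (leq_ltn_trans (leq_subr _ _) HjL).
Qed.

Lemma rts_all_root (F : fieldExtType 'F_2) (x : F) L E (D : {poly 'F_2}) :
  root (map_poly (in_alg F) D) (x ^+ E) -> all (root (map_poly (in_alg F) D)) (rts x L E).
Proof.
move=> H; apply/allP => z /mapP [i _ ->]; elim: i {z} => [|i IH].
  by rewrite expn0 mul1n.
by rewrite -r_next; apply: root_sq.
Qed.

Lemma size_rts (F : fieldType) (x : F) L E : size (rts x L E) = L.
Proof. by rewrite size_map size_iota. Qed.

Lemma P_primitive (F : fieldExtType 'F_2) (x : F) L E (P : {poly 'F_2}) :
  (0 < L)%N -> x != 0 -> x ^+ (2 ^ L - 1) = 1 ->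
  (forall m, x ^+ m = 1 -> (2 ^ L - 1 %| m)%N) -> coprime (2 ^ L - 1) E ->
  map_poly (in_alg F) P = Qp x L E -> primitive_poly P.
Proof.
move=> HL Hx HV Hord HcE HP.
have Hu := rts_uniq HL Hx Hord HcE.
have HQ := Qp_rts x L E.
have HsP : size P = L.+1.
  by rewrite -(size_map_poly (in_alg F)) HP HQ size_prod_XsubC size_rts.
have HmP : P \is monic.
  by rewrite -(map_monic (in_alg F)) HP HQ monic_prod_XsubC.
have HrE : root (map_poly (in_alg F) P) (x ^+ E).
  rewrite HP HQ root_prod_XsubC; apply/mapP; exists 0%N.
    by rewrite mem_iota /= add0n.
  by rewrite expn0 mul1n.
have Hbig : forall D : {poly 'F_2}, D != 0 ->
    root (map_poly (in_alg F) D) (x ^+ E) -> (L < size D)%N.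
  move=> D HD HrD; rewrite -(size_map_poly (in_alg F)) -(size_rts x L E).
  apply: max_poly_roots => //; first by rewrite map_poly_eq0.
  exact: rts_all_root.
have HP0 : P != 0 by rewrite -size_poly_gt0 HsP.
apply/primitive_polyP; rewrite (prim_card HsP HL HmP); split.
- split => //; split; first by rewrite HsP ltnS.
  move=> q Hq1 /dvdpP [r Hr].
  have Hq0 : q != 0 by apply: contraNneq HP0 => Hq; rewrite Hr Hq mulr0.
  have Hr0 : r != 0 by apply: contraNneq HP0 => Hr'; rewrite Hr Hr' mul0r.
  move: HrE; rewrite Hr rmorphM /= rootM => /orP [Hrr|Hrq].
    have H1 := Hbig r Hr0 Hrr; have Hs := size_mul Hr0 Hq0; rewrite -Hr HsP in Hs.
    rewrite -size_poly_eq0 in Hq0.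
    exfalso; move: Hq0 Hq1 H1 Hs.
    set a := size r; set b := size q => /eqP Hb0 /eqP Hb1 /ssrnat.ltP H1 Hs.
    have Hb0' : b <> 0%N by exact Hb0. have Hb1' : b <> 1%N by exact Hb1.
    move: Hs; rewrite -subn1 -minusE -plusE => Hs; lia.
  rewrite -Hr -dvdp_size_eqp; last by rewrite Hr dvdp_mull.
  rewrite eqn_leq HsP (Hbig q Hq0 Hrq) andbT -HsP.
  by apply: dvdp_leq HP0 _; rewrite Hr dvdp_mull.
- rewrite -(dvdp_map (in_alg F)) map_XnB HP HQ.
  apply: uniq_roots_dvdp; last by rewrite uniq_rootsE.
  apply/allP => z /mapP [i _ ->]; rewrite root_XnB -exprM mulnC exprM HV expr1n //.
- move=> n Hn; apply/negP; rewrite -(dvdp_map (in_alg F)) map_XnB => Hd.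
  have := root_dvdp Hd HrE; rewrite root_XnB -exprM => /eqP /Hord.
  rewrite Gauss_dvdr // => /(dvdn_leq (proj1 (andP Hn))).
  by rewrite leqNgt (proj2 (andP Hn)).
Qed.


Unset Implicit Arguments. Set Strict Implicit.
Theorem lemma2 (L1 L2 : nat) (C1 C2 : {poly 'F_2}) (u v : nat -> 'F_2)
    (F : fieldExtType 'F_2) (lambda : F)
    (hL1 : (0 < L1)%N) (hL12 : (L1 < L2)%N) (hcop : coprime L1 L2)
    (hSR1 : ml_lfsr L1 C1 u) (hSR2 : ml_lfsr L2 C2 v)
    (hF : \dim {: F} = L2)
    (hroot : root (map_poly (in_alg F) C2) lambda) :
  let E := (2 ^ L1 - 1)%N in
  let N := (2 ^ L1.-1)%N in
  exists P : {poly 'F_2},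
    [/\ map_poly (in_alg F) P
          = \prod_(i < L2) ('X + (lambda ^+ (2 ^ i * E))%:P),
        primitive_poly P
      & forall z : nat -> 'F_2, shrunken u v z -> lin_rec (P ^+ N) z].
Proof.
move=> E N.
have HL2 : (0 < L2)%N := ltn_trans hL1 hL12.
have [Hs2 H12 Hirr2 Hr2 [Hnz2 Hdv2 Hmin2]] := ml_facts HL2 hSR2.
have [HV Hord] := lam_order HL2 hSR2 hroot.
have HVpos : (0 < 2 ^ L2 - 1)%N by rewrite subn_gt0 -{1}(expn0 2) ltn_exp2l.
have Hx0 : lambda != 0.
  apply/negP => /eqP Hl; move: HV; rewrite Hl expr0n.
  by rewrite eqn0Ngt HVpos /= => /esym/eqP; rewrite oner_eq0.
have HcE : coprime (2 ^ L2 - 1) E by apply: coprime_pow2; rewrite coprime_sym.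
have Hw : lambda ^+ (2 ^ L2 * E) = lambda ^+ E.
  rewrite -{1}(subnK (expn_gt0 2 L2)) mulnDl exprD exprM HV expr1n mul1r mul1n.
  done.
set Q := Qp lambda L2 E.
pose P := \poly_(i < size Q) (if Q`_i == 1 then 1 else 0 : 'F_2).
have HP : map_poly (in_alg F) P = Q.
  apply/polyP => i; rewrite coef_map coef_poly /=.
  case: ifP => Hi.
    case: (Qp_coef i Hw) => ->; first by rewrite eq_sym oner_eq0 scale0r.
    by rewrite eqxx scale1r.
  by rewrite scale0r nth_default // leqNgt Hi.
exists P; split => //.
  exact: (P_primitive HL2 Hx0 HV Hord HcE HP).
move=> z Hz.
have HrQ : root Q (lambda ^+ E).
  rewrite /Q Qp_rts root_prod_XsubC; apply/mapP; exists 0%N.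
    by rewrite mem_iota /= add0n.
  by rewrite expn0 mul1n.
have Hdiv : C2 %| P \Po 'X^E.
  apply: (root_irr (f := in_alg F) Hirr2 hroot).
  by rewrite map_comp_poly map_polyXn /root horner_comp hornerXn HP.
have HrecE := lin_rec_dvd Hr2 Hdiv.
have Hper : forall n, u (n + E)%N = u n.
  by move=> n; rewrite -{1}(mul1n E) (ml_period hL1 hSR1).
have HN := ml_count hL1 hSR1.
rewrite /N F2_frobn.
exact: (shrunken_rec HrecE Hper HN Hz).
Qed.
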